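(* Let $G$ be a primitive permutation group of type PA preserving a product structure $\Delta^I$, and let $H\le\mathrm{Sym}(\Delta)$ be such that $G\le H\wr\mathrm{Sym}(I)$ (in product action). If $G$ contains a quasi-semiregular element, then $H$ contains quasi-semiregular elements (on $\Delta$), and every quasi-semiregular element of prime order in $G$ lies in the base group $H^I$.
   Context: A permutation $g$ is quasi-semiregular if $\langle g\rangle$ has a unique fixed point and acts semiregularly (only the identity fixes a point) on the remaining points. Product action of $H\wr\mathrm{Sym}(I)$ on $\Delta^I$: the base group $H^I$ acts coordinatewise and $\mathrm{Sym}(I)$ permutes coordinates. *)

(* Defs.v *)
From mathcomp Require Import all_boot all_fingroup all_solvable.
Set Implicit Arguments. Unset Strict Implicit. Unset Printing Implicit Defensive.
Local Open Scope group_scope.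

(* Product action of {perm D} wr {perm I} on {ffun I -> D}:
   the pair (h, s) sends x to the function i |-> h i (x (s^-1 i)),
   i.e. (delta_i)_i  |->  (delta_{i s^-1} ^ h_{i s^-1}) reindexed;
   the base group acts coordinatewise and s permutes coordinates. *)
Definition prodact (I D : finType) (h : {ffun I -> {perm D}}) (s : {perm I})
    (x : {ffun I -> D}) : {ffun I -> D} :=
  [ffun i => h i (x (s^-1 i))].

Definition wreath_prod (I D : finType) (H : {set {perm D}}) :
    {set {perm {ffun I -> D}}} :=
  [set p : {perm {ffun I -> D}} | [exists h : {ffun I -> {perm D}}, exists s : {perm I},
            [forall i, h i \in H] && [forall x, p x == prodact h s x]]].

Definition base_group (I D : finType) (H : {set {perm D}}) :
    {set {perm {ffun I -> D}}} :=
  [set p : {perm {ffun I -> D}} | [exists h : {ffun I -> {perm D}},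
            [forall i, h i \in H] && [forall x, p x == prodact h 1 x]]].

Definition socle (gT : finGroupType) (G : {set gT}) : {set gT} :=
  <<\bigcup_(N : {group gT} | minnormal N G && (N \subset G)) N>>.

Definition quasi_semiregular (T : finType) (g : {perm T}) : Prop :=
  exists w : T, [set x | g x == x] = [set w] /\
    forall x, x != w -> forall k : nat, (g ^+ k) x = x -> g ^+ k = 1.

Definition primitive_PA (I D : finType) (G : {group {perm {ffun I -> D}}}) :
    Prop :=
  [/\ G \subset wreath_prod I [set: {perm D}],
      [primitive G, on [set: {ffun I -> D}] | 'P],
      1 < #|I| &
      exists T : {group {perm D}},
        [/\ simple T, ~~ abelian T,
            exists d : D, 'C_T[d | 'P] != 1 &
            socle G = base_group I T]].

(* Main.v *)
Require Import Defs.
From mathcomp Require Import all_boot all_fingroup all_solvable.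
Set Implicit Arguments. Unset Strict Implicit. Unset Printing Implicit Defensive.
Local Open Scope group_scope.

Section Aux.
Variables (I D : finType).
Notation T := {ffun I -> D}.

Definition rep (g : {perm T}) (h : {ffun I -> {perm D}}) (s : {perm I}) :=
  forall x, g x = prodact h s x.

Definition upd (w : T) (i0 : I) (d : D) : T :=
  [ffun j => if j == i0 then d else w j].

Lemma rep_pow g h s n (x x' : T) (i : I) : rep g h s -> x i = x' i ->
  (g ^+ n) x ((s ^+ n) i) = (g ^+ n) x' ((s ^+ n) i).
Proof.
move=> R; elim: n i => [|n IH] i E; first by rewrite !expg0 !perm1.
rewrite !expgSr !permM !R /prodact !ffunE permK IH //.
Qed.

Lemma rep_s g h s n h' s' (a b : D) : a != b -> rep g h s -> rep (g ^+ n) h' s' ->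
  forall k, s' k = (s ^+ n) k.
Proof.
move=> ab R R' k; apply/eqP/negPn/negP => ne.
pose x : T := [ffun => a]; pose x' := upd x k b.
have : (g ^+ n) x (s' k) != (g ^+ n) x' (s' k).
  rewrite !R' /prodact !ffunE permK eqxx (inj_eq perm_inj).
  by [].
case/negP; apply/eqP.
rewrite -(permKV (s ^+ n) (s' k)) in ne *.
apply: rep_pow R _.
rewrite /x' /upd !ffunE; case: eqP => // E.
by move: ne; rewrite E eqxx.
Qed.

Lemma rep_fix (g : {perm T}) (w : T) n : g w = w -> (g ^+ n) w = w.
Proof. by move=> E; rewrite permX_fix. Qed.

Lemma fixcon (g : {perm T}) h s (w : T) i0 d : rep g h s -> g w = w ->
  (g ^+ fingraph.order s i0) (upd w i0 d) i0 = d -> exists x, g x = x /\ x i0 = d.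
Proof.
move=> R gw Hm; set y := upd w i0 d; set m := fingraph.order s i0.
have injs : injective s := @perm_inj _ s.
pose x : T := [ffun i => if fconnect s i0 i then (g ^+ findex s i0 i) y i else w i].
exists x; split; last first.
  by rewrite /x ffunE connect0 findex0 expg0 perm1 /y /upd ffunE eqxx.
apply/ffunP => i; rewrite R /prodact !ffunE.
case ci: (fconnect s i0 i)...
- set k := findex s i0 i.
  have ik : iter k s i0 = i by rewrite /k iter_findex.
  have km : k < m by rewrite /k /m findex_max.
  pose k' := if k is k1.+1 then k1 else m.-1.
  have k'm : k' < m.
    rewrite /k'; case: (k) km => [|k1] km; last by apply: ltnW.
    by rewrite prednK ?order_gt0 // ltnSn.
  have sk' : iter k' s i0 = s^-1 i.
    apply: (@perm_inj _ s); rewrite permKV -iterS /k' -ik; case: (k) => // .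
    by rewrite /m prednK ?order_gt0 // (iter_order (@perm_inj _ s)).
  have cj : fconnect s i0 (s^-1 i) by rewrite -sk' fconnect_iter.
  rewrite cj -sk' findex_iter // sk'.
  transitivity (g ((g ^+ k') y) i); first by rewrite R /prodact ffunE.
  rewrite -permM -expgSr.
  move: ik; rewrite /k'; case: (k) => [|k1] //= ik.
  by rewrite /m prednK ?order_gt0 // -ik Hm expg0 perm1 /y /upd ffunE eqxx.
- have cj : fconnect s i0 (s^-1 i) = false.
    apply/negbTE/negP => cj; move/negbT: ci => /negP; apply.
    by apply: (connect_trans cj); rewrite -{2}(permKV s i) fconnect1.
  rewrite cj.
  by rewrite -[in RHS]gw R /prodact ffunE.
Qed.

Lemma partc (H : {group {perm D}}) (g : {perm T}) h s (w : T) i0 (a b : D) h' s' :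
  a != b -> rep g h s -> rep (g ^+ fingraph.order s i0) h' s' ->
  (forall i, h' i \in H) ->
  [set x | g x == x] = [set w] ->
  (forall x, x != w -> forall k : nat, (g ^+ k) x = x -> g ^+ k = 1) ->
  [/\ h' i0 \in H, quasi_semiregular (h' i0) &
     forall k e, (g ^+ (fingraph.order s i0 * k)) (upd w i0 e)
                 = upd w i0 ((h' i0 ^+ k) e)].
Proof.
move=> ab R R' hH Fix Sr.
set m := fingraph.order s i0; set c := h' i0.
have gw : g w = w by apply/eqP; move: (set11 w); rewrite -Fix inE.
have s'0 : s' i0 = i0.
  by rewrite (rep_s ab R R') permX (iter_order (@perm_inj _ s)).
have s'i0 : s'^-1 i0 = i0 by rewrite -{1}s'0 permK.
have s'i : forall i, i != i0 -> s'^-1 i != i0.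
  by move=> i; apply: contraNneq => E; rewrite -(permKV s' i) E s'0.
have step : forall e, (g ^+ m) (upd w i0 e) = upd w i0 (c e).
  move=> e; apply/ffunP => i; rewrite R' /prodact /upd !ffunE.
  case: (eqVneq i i0) => [->|ne]; first by rewrite s'i0 !eqxx.
  rewrite (negbTE (s'i i ne)).
  by rewrite -[in RHS](rep_fix m gw) R' /prodact ffunE.
have stepk : forall k e, (g ^+ (m * k)) (upd w i0 e) = upd w i0 ((c ^+ k) e).
  move=> k; elim: k => [|k IH] e; first by rewrite muln0 !expg0 !perm1.
  by rewrite mulnS expgD permM step IH expgS permM.
have updw : upd w i0 (w i0) = w.
  by apply/ffunP => i; rewrite /upd ffunE; case: eqP => // ->.
have updne : forall e, e != w i0 -> upd w i0 e != w.
  move=> e; apply: contraNneq => /ffunP /(_ i0); rewrite /upd ffunE eqxx => ->; exact: eqxx.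
split; [exact: hH | | exact: stepk]; rewrite /quasi_semiregular.
exists (w i0); split.
  apply/setP => e; rewrite !inE; apply/eqP/eqP => [ce|->].
    have := fixcon (d := e) (i0 := i0) R gw; rewrite -/m step ffunE eqxx => /(_ ce).
    case=> x [gx xi0]; have : x \in [set w] by rewrite -Fix inE gx.
    by rewrite inE => /eqP <-.
  by have := step (w i0); rewrite updw => /ffunP /(_ i0); rewrite /upd ffunE eqxx (rep_fix m gw).
move=> e ne k ck.
have := Sr _ (updne e ne) (m * k)%N; rewrite stepk ck => /(_ erefl) g1.
apply/permP => e'; rewrite perm1.
by have := stepk k e'; rewrite g1 perm1 => /ffunP /(_ i0); rewrite /upd !ffunE eqxx.
Qed.
End Aux.

Lemma wrP (I D : finType) (H : {set {perm D}}) g : g \in wreath_prod I H ->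
  exists (h : {ffun I -> {perm D}}) (s : {perm I}), (forall i, h i \in H) /\ rep g h s.
Proof.
rewrite inE => /existsP [h /existsP [s /andP [/forallP hH /forallP R]]].
by exists h, s; split => // x; apply/eqP.
Qed.

Theorem corollary5p3 (I D : finType) (G : {group {perm {ffun I -> D}}})
    (H : {group {perm D}}) :
  primitive_PA G ->
  G \subset wreath_prod I H ->
  (exists2 g, g \in G & quasi_semiregular g) ->
  (exists2 h, h \in H & quasi_semiregular h) /\
  (forall g, g \in G -> prime #[g] -> quasi_semiregular g ->
     g \in base_group I H).
Proof.
case=> _ _ cardI [T [_ _ [d0 Cne] _]] sGW exG.
have [a [b ab]] : exists a b : D, a != b.
  case/trivgPn: Cne => t /setIP [_ _] t1.
  have [e te] : exists e, t e != e.
    apply/existsP; apply: contraR t1 => /existsPn te.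
    by apply/eqP/permP => e; rewrite perm1; apply/eqP/negPn.
  by exists (t e), e.
have [i0 _] : exists i0 : I, true.
  by move: cardI => /ltnW /card_gt0P [i _]; exists i.
have memW : forall g, g \in G -> exists (h : {ffun I -> {perm D}}) (s : {perm I}), (forall i, h i \in H) /\ rep g h s.
  by move=> g gG; apply: wrP; apply: (subsetP sGW).
split.
  case: exG => g gG [w [Fix Sr]].
  have [h [s [hH R]]] := memW g gG.
  have [h' [s' [hH' R']]] := memW _ (groupX (fingraph.order s i0) gG).
  have [cH cq _] := partc (i0 := i0) ab R R' hH' Fix Sr.
  by exists (h' i0).
move=> g gG pg [w [Fix Sr]].
have [h [s [hH R]]] := memW g gG.
suff s1 : forall i, s^-1 i = i.
  rewrite inE; apply/existsP; exists h; apply/andP; split; first exact/forallP.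
  apply/forallP => x; apply/eqP; rewrite R /prodact; apply/ffunP => i.
  by rewrite !ffunE s1 invg1 perm1.
move=> i0'; apply/eqP/negPn/negP => ne.
set m := fingraph.order s i0'.
have [h' [s' [hH' R']]] := memW _ (groupX m gG).
have [cH [v [cFix _]] stepk] := partc (i0 := i0') ab R R' hH' Fix Sr.
set c := h' i0' in cH cFix stepk.
have c1 : c != 1.
  apply/eqP => c1; have : a \in [set x | c x == x] by rewrite inE c1 perm1.
  have : b \in [set x | c x == x] by rewrite inE c1 perm1.
  by rewrite cFix !inE => /eqP Eb /eqP Ea; move: ab; rewrite Ea Eb eqxx.
have gm1 : g ^+ m != 1.
  apply: contraNneq c1 => gm; apply/eqP/permP => e; rewrite perm1.
  have := stepk 1%N e; rewrite muln1 gm perm1 expg1 => /ffunP /(_ i0').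
  by rewrite /upd !ffunE eqxx.
have gin : g \in <[g ^+ m]>.
  suff -> : <[g ^+ m]> = <[g]> by apply: cycle_id.
  apply/eqP; rewrite eqEcard cycleX /=.
  have := cardSg (cycleX g m); case/primeP: pg => _ /(_ _ (cardSg (cycleX g m))).
  rewrite -/(#[g ^+ m]) order_eq1 (negbTE gm1) /= => /eqP -> _.
  by [].
case/cycleP: gin => k gk.
have [e2 e2w] : exists e, e != w i0'.
  case: (eqVneq a (w i0')) => [aw|]; last by exists a.
  by exists b; rewrite -aw eq_sym.
have := stepk k (w i0'); have := stepk k e2.
rewrite !expgM -!gk => /ffunP /(_ i0') E2 /ffunP /(_ i0') E1.
move: E1 E2; rewrite !R /prodact /upd !ffunE !eqxx (negbTE ne) => -> /perm_inj E.
by move: e2w; rewrite E eqxx.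
Qed.
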